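(* Let $\iota:M(\mathbb R(y))\to M(\mathbb R(x,y))$ be an injective map compatible with restriction such that all places in the image of $\iota$ have the same restriction to $\mathbb R(x)$. Suppose that for some $\xi\in\mathrm{im}(\iota)$ with $\xi(x)=a\in\mathbb R$ and $\xi(y)=b\in\mathbb R$ there is $n\in\mathbb N$ with $0<v_\xi(x-a)<n\,v_\xi(y-b)$. Then $\iota$ is not continuous. The same holds if $\xi(x)=\infty$ and $x-a$ is replaced by $1/x$, and/or $\xi(y)=\infty$ and $y-b$ is replaced by $1/y$.
   Context: For a field $K$, $M(K)$ is the set of $\mathbb R$-places $K\to\mathbb R\cup\{\infty\}$, with topology generated by the subbasis $H'(b)=\{\zeta\in M(K)\mid \infty\ne\zeta(b)>0\}$, $b\in K$. $\iota$ is compatible with restriction if $\iota(\zeta)|_{\mathbb R(y)}=\zeta$ for all $\zeta$. $v_\xi$ denotes the valuation associated with the place $\xi$, with values in an ordered abelian group. *)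

(* Defs.v *)
From HB Require Import structures.
From mathcomp Require Import all_boot all_order all_algebra.
From mathcomp Require Import Rstruct.
Set Implicit Arguments.
Unset Strict Implicit.
Unset Printing Implicit Defensive.
Import Order.TTheory GRing.Theory Num.Theory.
Local Open Scope ring_scope.

Notation RR := Rdefinitions.R.

(** An R-place of a field [K] is a place [K -> R \cup {oo}]; we model
   [R \cup {oo}] by [option RR], where [None] is [oo].  The conditions say:
   the finite locus [O := {a | zeta a <> oo}] is closed under [1, +, -, *]
   and [zeta] is a ring morphism on it, and for [a <> 0],
   [zeta a = oo <-> zeta (a^-1) = 0].  (Hence [O] is a valuation ring
   with maximal ideal [zeta^-1(0)] and [zeta] induces an embedding of the
   residue field into R: this is the usual notion of a place.) *)
Definition is_place (K : fieldType) (zeta : K -> option RR) : Prop :=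
  [/\ zeta 1 = Some 1,
      forall a b r s, zeta a = Some r -> zeta b = Some s ->
        zeta (a + b) = Some (r + s) /\ zeta (a * b) = Some (r * s),
      forall a r, zeta a = Some r -> zeta (- a) = Some (- r)
    & forall a, a != 0 -> (zeta a = None <-> zeta a^-1 = Some 0)].

Definition place (K : fieldType) := {zeta : K -> option RR | is_place zeta}.

Definition pl (K : fieldType) (z : place K) : K -> option RR := proj1_sig z.

Definition H' (K : fieldType) (b : K) (z : place K) : Prop :=
  exists r, pl z b = Some r /\ 0 < r.

(** Open sets of the topology on [M(K)] generated by the subbasis
   [{H'(b) | b \in K}]: unions of finite intersections of subbasic sets. *)
Definition is_open (K : fieldType) (U : place K -> Prop) : Prop :=
  forall z, U z -> exists bs : seq K,
    (forall b, b \in bs -> H' b z) /\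
    (forall w, (forall b, b \in bs -> H' b w) -> U w).

Definition continuous_map (K L : fieldType) (f : place K -> place L) : Prop :=
  forall U : place L -> Prop, is_open U -> is_open (fun z => U (f z)).

(** With valuation ring [O_xi = {h | xi h <> oo}], the associated valuation
   satisfies [v_xi f <= v_xi g] iff [g \in f * O_xi]; the value group is
   totally ordered, so [v_xi f < v_xi g] iff not [v_xi g <= v_xi f]. *)
Definition vle (K : fieldType) (xi : place K) (f g : K) : Prop :=
  exists h, pl xi h <> None /\ g = f * h.

Definition vlt (K : fieldType) (xi : place K) (f g : K) : Prop :=
  ~ vle xi g f.

(** [Ky = R(y) = Frac R[y]] and [Kxy = R(y)(x) = Frac (R(y)[x])], which is
   (canonically isomorphic to) R(x,y). *)
Local Notation "x %:F" := (@FracField.tofrac _ x).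

Definition Ky : fieldType := {fraction {poly RR}}.
Definition Kxy : fieldType := {fraction {poly Ky}}.

Definition emb (f : Ky) : Kxy := (f%:P)%:F.

Definition yvar : Kxy := emb ('X%:F).
Definition xvar : Kxy := ('X : {poly Ky})%:F.

Definition cst (c : RR) : Kxy := emb ((c%:P)%:F).

(** the polynomial p(x) in R(x,y), for p a real polynomial; elements of the
   subfield R(x) of R(x,y) are exactly the [polx p / polx q]. *)
Definition polx (p : {poly RR}) : Kxy :=
  (map_poly (fun c : RR => ((c%:P)%:F : Ky)) p)%:F.

Definition restr_y (z : place Kxy) : Ky -> option RR := fun f => pl z (emb f).

Definition locpar (xi : place Kxy) (t : Kxy) : Kxy :=
  match pl xi t with Some a => t - cst a | None => t^-1 end.

(* Main.v *)
Require Import Defs.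
From HB Require Import structures.
From mathcomp Require Import all_boot all_order all_algebra.
From mathcomp Require Import Rstruct.
From mathcomp Require Import ring lra zify.
From mathcomp Require Import polyrcf.
Import Order.TTheory GRing.Theory Num.Theory.
Local Open Scope ring_scope.
Set Implicit Arguments.
Unset Strict Implicit.

Section PlaceLemmas.
Variables (K : fieldType) (z : K -> option RR).
Hypothesis Hz : is_place z.

Lemma pz1 : z 1 = Some 1. Proof. by case: Hz. Qed.
Lemma pzD {a b r s} : z a = Some r -> z b = Some s -> z (a + b) = Some (r + s).
Proof. by case: Hz => _ H _ _ ha hb; case: (H _ _ _ _ ha hb). Qed.
Lemma pzM {a b r s} : z a = Some r -> z b = Some s -> z (a * b) = Some (r * s).
Proof. by case: Hz => _ H _ _ ha hb; case: (H _ _ _ _ ha hb). Qed.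
Lemma pzN {a r} : z a = Some r -> z (- a) = Some (- r).
Proof. by case: Hz => _ _ H _; apply: H. Qed.
Lemma pzVax {a} : a != 0 -> (z a = None <-> z a^-1 = Some 0).
Proof. by case: Hz => _ _ _ H; apply: H. Qed.
Lemma pz0 : z 0 = Some 0.
Proof.
have h := pzD pz1 (pzN pz1).
by rewrite subrr in h; rewrite h subrr.
Qed.
Lemma pzB {a b r s} : z a = Some r -> z b = Some s -> z (a - b) = Some (r - s).
Proof. by move=> ha hb; apply: pzD ha (pzN hb). Qed.
Lemma pz_neq0 {a r} : z a = Some r -> r != 0 -> a != 0.
Proof. by move=> ha; apply: contra => /eqP a0; move: ha; rewrite a0 pz0 => -[->]. Qed.
Lemma pzV {a r} : z a = Some r -> r != 0 -> z a^-1 = Some r^-1.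
Proof.
move=> ha r0; have a0 := pz_neq0 ha r0.
case hv: (z a^-1) => [s|].
  have := pzM ha hv; rewrite mulfV // pz1 => -[e].
  by congr Some; apply: (@mulfI _ r) => //; rewrite mulfV // -e.
have ai0 : a^-1 != 0 by rewrite invr_eq0.
move/(pzVax ai0): hv; rewrite invrK ha => -[e].
by rewrite e eqxx in r0.
Qed.
Lemma pzVN {a} : z a = None -> z a^-1 = Some 0.
Proof.
move=> ha; have a0 : a != 0 by apply/eqP => e; rewrite e pz0 in ha.
by apply/(pzVax a0).
Qed.
Lemma pzV0 {a} : a != 0 -> z a = Some 0 -> z a^-1 = None.
Proof.
move=> a0 ha; have ai0 : a^-1 != 0 by rewrite invr_eq0.
by apply/(pzVax ai0); rewrite invrK.
Qed.
Lemma pzX {a r n} : z a = Some r -> z (a ^+ n) = Some (r ^+ n).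
Proof.
move=> ha; elim: n => [|n IH]; first by rewrite !expr0 pz1.
by rewrite !exprS (pzM ha IH).
Qed.
Lemma pz_infM {a b s} : z a = None -> z b = Some s -> s != 0 -> z (a * b) = None.
Proof.
move=> ha hb s0.
have a0 : a != 0 by apply/eqP => e; rewrite e pz0 in ha.
have b0 := pz_neq0 hb s0.
apply/(pzVax (mulf_neq0 a0 b0)).
rewrite invfM (pzM (pzVN ha) (pzV hb s0)) mul0r //.
Qed.
Lemma pz_infD {a b s} : z a = None -> z b = Some s -> z (b - a) = None.
Proof.
move=> ha hb; case h: (z (b - a)) => [u|] //.
have := pzB hb h; rewrite opprB addrC subrK ha //.
Qed.
Lemma pzn {n} : z n%:R = Some n%:R.
Proof.
elim: n => [|n IH]; first by rewrite pz0.
by rewrite -addn1 !natrD (pzD IH pz1).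
Qed.
End PlaceLemmas.
Section Const.
Variables (K : fieldType) (z : K -> option RR).
Hypothesis Hz : is_place z.
Variable e : {rmorphism RR -> K}.

Lemma pz_sq1 u : z (u * u + 1) <> Some 0.
Proof.
case hu: (z u) => [r|].
  rewrite (pzD Hz (pzM Hz hu hu) (pz1 Hz)) => -[] /eqP.
  by rewrite gt_eqF //; nra.
have u0 : u != 0 by apply/eqP => e0; rewrite e0 (pz0 Hz) in hu.
have w0 := pzVN Hz hu.
have h1 : z (u^-1 * u^-1 + 1) = Some 1.
  by rewrite (pzD Hz (pzM Hz w0 w0) (pz1 Hz)) mul0r add0r.
have uu : z (u * u) = None.
  apply/(pzVax Hz (mulf_neq0 u0 u0)).
  by rewrite invfM (pzM Hz w0 w0) mul0r.
have -> : u * u + 1 = (u * u) * (u^-1 * u^-1 + 1).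
  by field.
by rewrite (pz_infM Hz uu h1) ?oner_neq0.
Qed.

Lemma pz_e n : z (e n%:R) = Some n%:R.
Proof. by rewrite rmorph_nat (pzn Hz). Qed.

Lemma pz_e_neq0 d : d != 0 -> z (e d) <> Some 0.
Proof.
move=> d0 hd.
set N := Num.Def.archi_bound ((d * d)^-1).
have dd : 0 < d * d.
  by rewrite lt0r mulf_neq0 //= -expr2 sqr_ge0.
have hN : (d * d)^-1 < N%:R by apply: archi_boundP; rewrite invr_ge0 ltW.
have pos : 0 <= N%:R * (d * d) - 1.
  have : (d*d)^-1 * (d*d) < N%:R * (d*d) by rewrite ltr_pM2r.
  rewrite mulVf ?lt0r_neq0 // => h; lra.
set s := Num.sqrt (N%:R * (d * d) - 1).
have ss : s * s + 1 = N%:R * (d * d) by rewrite -expr2 sqr_sqrtr // subrK.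
apply: (@pz_sq1 (e s)).
rewrite -rmorphM -(rmorph1 e) -rmorphD ss !rmorphM.
by rewrite (pzM Hz (pz_e N) (pzM Hz hd hd)) !mulr0.
Qed.

Lemma pz_e_fin c : exists r, z (e c) = Some r.
Proof.
case h: (z (e c)) => [r|]; first by exists r.
have c0 : c != 0 by apply/eqP => e0; rewrite e0 rmorph0 (pz0 Hz) in h.
have := pzVN Hz h; rewrite -fmorphV => /(pz_e_neq0 (invr_neq0 c0)) //.
Qed.

Definition phi c := odflt 0 (z (e c)).
Lemma phiE c : z (e c) = Some (phi c).
Proof. by rewrite /phi; case: (pz_e_fin c) => r ->. Qed.
Lemma phiD a b : phi (a + b) = phi a + phi b.
Proof. by have := pzD Hz (phiE a) (phiE b); rewrite -rmorphD phiE => -[]. Qed.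
Lemma phiM a b : phi (a * b) = phi a * phi b.
Proof. by have := pzM Hz (phiE a) (phiE b); rewrite -rmorphM phiE => -[]. Qed.
Lemma phiN a : phi (- a) = - phi a.
Proof. by have := pzN Hz (phiE a); rewrite -rmorphN phiE => -[]. Qed.
Lemma phin n : phi n%:R = n%:R.
Proof. by have := pz_e n; rewrite phiE => -[]. Qed.
Lemma phiz (m : int) : phi m%:~R = m%:~R.
Proof. by case: m => n; rewrite ?NegzE ?mulrNz ?phiN phin. Qed.
Lemma phi_pos c : 0 < c -> 0 < phi c.
Proof.
move=> c0; have s := sqr_sqrtr (ltW c0).
rewrite -s expr2 phiM lt0r -expr2 sqr_ge0 andbT.
apply/eqP => h.
have : phi (Num.sqrt c * Num.sqrt c) = 0 by rewrite phiM -expr2 h.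
rewrite -expr2 s => hc.
by apply: (pz_e_neq0 (lt0r_neq0 c0)); rewrite phiE hc.
Qed.
Lemma phi_lt a b : a < b -> phi a < phi b.
Proof.
move=> ab; have h : 0 < b - a by rewrite subr_gt0.
by have := phi_pos h; rewrite phiD phiN subr_gt0.
Qed.

Lemma phi_id c : phi c = c.
Proof.
wlog hc : c / c < phi c.
  move=> W; have [h|h|h] := ltgtP c (phi c); first exact: W; last by rewrite -h.
  have := W (- c); rewrite phiN ltrN2 => /(_ h) /eqP.
  by rewrite eqr_opp => /eqP.
exfalso.
set dl := phi c - c.
have dl0 : 0 < dl by rewrite /dl subr_gt0.
set N := Num.Def.archi_bound dl^-1.
have hN : dl^-1 < N%:R by apply: archi_boundP; rewrite invr_ge0 ltW.
have N1 : 1 < N%:R * dl.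
  have : dl^-1 * dl < N%:R * dl by rewrite ltr_pM2r.
  by rewrite mulVf ?lt0r_neq0.
set m := Num.Def.floor (N%:R * c) + 1.
have m1 : N%:R * c < m%:~R by apply: floorD1_gt.
have m2 : m%:~R <= N%:R * c + 1.
  rewrite /m intrD lerD2r; exact: floor_le.
have := phi_lt m1; rewrite phiz phiM phin => h.
have : N%:R * phi c <= N%:R * c + 1 by apply: le_trans m2; apply: ltW.
rewrite /dl in N1; lra.
Qed.

Lemma pz_const c : z (e c) = Some c.
Proof. by rewrite phiE phi_id. Qed.
End Const.
Notation "x %:F" := (@FracField.tofrac _ x).
Notation PR := {poly RR}.

Lemma fracrep (f : Ky) : exists p q : PR, q != 0 /\ f = p%:F / q%:F.
Proof.
elim/quotW: f => x.
exists x.1, x.2; split; first exact: denom_ratioP.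
have q0 : (x.2)%:F != 0 :> Ky by rewrite tofrac_eq0 denom_ratioP.
apply: (@mulIf _ (x.2%:F)) => //.
rewrite mulfVK //.
rewrite !piE.
apply/eqmodP; rewrite /= equivfE /= /mulf /=.
rewrite !numden_Ratio ?oner_neq0 ?mulf_neq0 ?denom_ratioP ?oner_neq0 //.
by rewrite !mulr1 mulrC.
Qed.
Lemma cancelF (A B C : PR) : C != 0 -> (A * C)%:F / (B * C)%:F = A%:F / B%:F :> Ky.
Proof.
move=> c0; rewrite !rmorphM /= invfM mulrACA divff ?mulr1 //.
by rewrite tofrac_eq0.
Qed.

Lemma reduce (P Q : PR) t : P != 0 -> Q != 0 ->
  exists P1 Q1 : PR, P1.[t] != 0 /\ Q1.[t] != 0 /\
   ((exists k, P%:F / Q%:F = (P1 * ('X - t%:P) ^+ k)%:F / Q1%:F :> Ky) \/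
    (exists k, P%:F / Q%:F = P1%:F / (Q1 * ('X - t%:P) ^+ k.+1)%:F :> Ky)).
Proof.
move=> P0 Q0.
case: (multiplicity_XsubC P t) => m [P1 hP1 eP].
case: (multiplicity_XsubC Q t) => m' [Q1 hQ1 eQ].
rewrite P0 /= in hP1; rewrite Q0 /= in hQ1.
exists P1, Q1; split; first by move: hP1; rewrite /root.
split; first by move: hQ1; rewrite /root.
have u0 : forall n, ('X - t%:P) ^+ n != 0 :> PR.
  by move=> n; rewrite expf_neq0 // polyXsubC_eq0.
case: (leqP m' m) => hm.
  left; exists (m - m')%N.
  by rewrite eP eQ -(subnK hm) exprD mulrA cancelF // subnK.
right; exists (m' - m.+1)%N.
have em : m' = ((m' - m.+1).+1 + m)%N by lia.
by rewrite eP eQ {1}em exprD mulrA cancelF.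
Qed.

Definition evrel (t : RR) (f : Ky) (r : RR) :=
  exists p q : PR, q.[t] != 0 /\ f = p%:F / q%:F /\ r = p.[t] / q.[t].

Lemma hq0 (q : PR) t : q.[t] != 0 -> q != 0.
Proof. by apply: contra => /eqP ->; rewrite horner0. Qed.

Lemma evrel_uniq t f r r' : evrel t f r -> evrel t f r' -> r = r'.
Proof.
move=> [p [q [q0 [-> ->]]]] [p' [q' [q0' [e ->]]]].
have Q0 := hq0 q0; have Q0' := hq0 q0'.
have : (p * q')%:F = (p' * q)%:F :> Ky.
  rewrite !rmorphM /=.
  have Fq : q%:F != 0 :> Ky by rewrite tofrac_eq0.
  have Fq' : q'%:F != 0 :> Ky by rewrite tofrac_eq0.
  have f1 : p%:F = p'%:F / q'%:F * q%:F :> Ky.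
rewrite -e.
by rewrite (divfK Fq).
  by rewrite f1 mulrAC divfK.
move/eqP; rewrite tofrac_eq => /eqP /(congr1 (horner^~ t)).
rewrite !hornerM => h.
by apply/eqP; rewrite eqr_div // h.
Qed.

From Stdlib Require Import ClassicalEpsilon.

Definition ev (t : RR) (f : Ky) : option RR :=
  match excluded_middle_informative (exists r, evrel t f r) with
  | left H => Some (proj1_sig (constructive_indefinite_description _ H))
  | right _ => None end.

Lemma evS t f r : evrel t f r -> ev t f = Some r.
Proof.
move=> h; rewrite /ev; case: excluded_middle_informative => [H|H].
  by case: constructive_indefinite_description => r' /= h'; rewrite (evrel_uniq h' h).
by exfalso; apply: H; exists r.
Qed.

Lemma evS' t f r : ev t f = Some r -> evrel t f r.
Proof.
rewrite /ev; case: excluded_middle_informative => [H|H] //.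
by case: constructive_indefinite_description => r' /= h' [<-].
Qed.

Lemma evN t f : ev t f = None -> forall r, ~ evrel t f r.
Proof. by move=> h r /evS; rewrite h. Qed.

Lemma evN' t f : (forall r, ~ evrel t f r) -> ev t f = None.
Proof. by move=> h; case e: (ev t f) => [r|] //; case: (h r); apply: evS'. Qed.
Lemma Fq0 (q : PR) : q != 0 -> q%:F != 0 :> Ky.
Proof. by rewrite tofrac_eq0. Qed.

Lemma ev_place t : is_place (ev t).
Proof.
split.
- apply: evS; exists 1, 1; split; first by rewrite hornerC oner_neq0.
  by rewrite rmorph1 divr1 hornerC divr1.
- move=> a b r s /evS' [p [q [q0 [-> ->]]]] /evS' [p' [q' [q0' [-> ->]]]].
  have Q0 := Fq0 (hq0 q0); have Q0' := Fq0 (hq0 q0').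
  split; apply: evS.
    exists (p * q' + p' * q), (q * q'); split; first by rewrite hornerM mulf_neq0.
    split; first by rewrite (addf_div _ _ Q0 Q0') rmorphD !rmorphM.
    by rewrite (addf_div _ _ q0 q0') !hornerE.
  exists (p * p'), (q * q'); split; first by rewrite hornerM mulf_neq0.
  split; first by rewrite mulf_div !rmorphM.
  by rewrite mulf_div !hornerE.
- move=> a r /evS' [p [q [q0 [-> ->]]]]; apply: evS.
  exists (- p), q; split => //; split; first by rewrite rmorphN mulNr.
  by rewrite hornerN mulNr.
move=> a a0; split.
- move=> ha.
  case: (fracrep a) => P [Q [Q0 ea]].
  have P0 : P != 0.
    by apply: contra a0 => /eqP P0; rewrite ea P0 rmorph0 mul0r.
  case: (reduce t P0 Q0) => P1 [Q1 [h1 [h2 [[k ek]|[k ek]]]]].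
    by exfalso; apply: (evN ha); exists (P1 * ('X - t%:P) ^+ k), Q1; rewrite -ek.
  apply: evS; exists (Q1 * ('X - t%:P) ^+ k.+1), P1; split => //; split.
    by rewrite ea ek invf_div.
  by rewrite !hornerE subrr expr0n /= mulr0 mul0r.
- move/evS' => [p [q [q0 [e1 e2]]]].
  case h: (ev t a) => [r|] //.
  move/evS': h => [p' [q' [q0' [e3 e4]]]].
  have : a * a^-1 = 1 by rewrite mulfV.
  have Q0 := Fq0 (hq0 q0); have Q0' := Fq0 (hq0 q0').
  rewrite e1 e3 mulf_div => /(congr1 (fun x => x * (q'%:F * q%:F))) /=.
  rewrite (divfK (mulf_neq0 Q0' Q0)) mul1r -!rmorphM => /eqP.
  rewrite tofrac_eq => /eqP /(congr1 (horner^~ t)).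
  rewrite !hornerE => e.
  have : p.[t] = 0.
    move: e2 => /esym /eqP; rewrite mulf_eq0 invr_eq0 (negbTE q0) orbF.
    by move/eqP.
  move=> p0; move: e; rewrite p0 ?mul0r ?mulr0 => /esym /eqP.
  by rewrite !mulf_eq0 (negbTE q0) (negbTE q0').
Qed.
Definition evp (t : RR) : place Ky := exist _ (ev t) (ev_place t).

Lemma plP (K : fieldType) (z : place K) : is_place (pl z).
Proof. exact: proj2_sig z. Qed.

Lemma zconst (z : place Ky) c : pl z ((c%:P)%:F) = Some c.
Proof.
have h := (pz_const (plP z) ((@FracField.tofrac _) \o polyC : {rmorphism RR -> Ky}) c).
exact h.
Qed.

Lemma zpoly (z : place Ky) b : pl z (('X : PR)%:F) = Some b ->
  forall p : PR, pl z (p%:F) = Some p.[b].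
Proof.
move=> hX; elim/poly_ind => [|p c IH].
  by rewrite rmorph0 horner0 (pz0 (plP z)).
rewrite rmorphD rmorphM /= hornerMXaddC.
exact: (pzD (plP z) (pzM (plP z) IH hX) (zconst z c)).
Qed.

Lemma classif (z : place Ky) beta b r : pl z (('X : PR)%:F) = Some beta ->
  pl z b = Some r -> r != 0 -> evrel beta b r.
Proof.
move=> hX hb r0; have Hz := plP z.
case: (fracrep b) => P [Q [Q0 eb]].
have P0 : P != 0.
  apply: contra r0 => /eqP P0; move: hb; rewrite eb P0 rmorph0 mul0r (pz0 Hz).
  by case=> <-.
case: (reduce beta P0 Q0) => P1 [Q1 [h1 [h2 [[k ek]|[k ek]]]]].
  move: hb; rewrite eb ek.
  rewrite (pzM Hz (zpoly hX _) (pzV Hz (zpoly hX Q1) h2)) => -[<-].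
  by exists (P1 * ('X - beta%:P) ^+ k), Q1.
exfalso; move: hb; rewrite eb ek mulrC.
have u0 : (Q1 * ('X - beta%:P) ^+ k.+1) != 0.
  by rewrite mulf_neq0 ?expf_neq0 ?polyXsubC_eq0 ?(hq0 h2).
have hz : pl z ((Q1 * ('X - beta%:P) ^+ k.+1)%:F) = Some 0.
  by rewrite (zpoly hX) !hornerE subrr expr0n /= mulr0.
by rewrite (pz_infM Hz (pzV0 Hz (Fq0 u0) hz) (zpoly hX P1) h1).
Qed.

Lemma lip (P : PR) beta : exists C, 0 <= C /\ forall t,
  `|t - beta| <= 1 -> `|P.[t] - P.[beta]| <= C * `|t - beta|.
Proof.
elim/poly_ind: P => [|Q c [C [C0 IH]]].
  by exists 0; split => // t _; rewrite !horner0 subrr normr0 mul0r.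
exists (C * (`|beta| + 1) + `|Q.[beta]|); split.
  by rewrite addr_ge0 // mulr_ge0 // addr_ge0.
move=> t ht; rewrite !hornerMXaddC.
have -> : Q.[t] * t + c - (Q.[beta] * beta + c) =
   (Q.[t] - Q.[beta]) * t + Q.[beta] * (t - beta) by ring.
have hQ := IH t ht.
have tt : `|t| <= `|t - beta| + `|beta|.
  by rewrite -[t in `|t|](subrK beta) ler_normD.
apply: le_trans (ler_normD _ _) _; rewrite !normrM.
have h1 : `|Q.[t] - Q.[beta]| * `|t| <= C * `|t - beta| * (`|beta| + 1).
  have a0 := normr_ge0 (Q.[t] - Q.[beta]); have b0 := normr_ge0 beta.
  have d0 := normr_ge0 (t - beta); have t0 := normr_ge0 t.
  move: hQ tt ht a0 b0 d0 t0 C0.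
  set A := `|Q.[t] - Q.[beta]|; set T := `|t|; set B := `|beta|.
  set D := `|t - beta|; nra.
set D := `|t - beta| in h1 *; set M := `|Q.[beta]|.
rewrite mulrDl; apply: lerD; first by rewrite mulrAC.
by rewrite mulrC.
Qed.

Lemma poscont (P : PR) beta : 0 < P.[beta] -> exists d, 0 < d /\
  forall t, `|t - beta| < d -> 0 < P.[t].
Proof.
move=> Pb; case: (lip P beta) => C [C0 hC].
exists (Order.min 1 (P.[beta] / (C + 1))); split.
  by rewrite lt_min ltr01 divr_gt0 //; lra.
move=> t; rewrite lt_min => /andP [t1 t2].
have := hC t (ltW t1).
have C1 : 0 < C + 1 by lra.
have : `|t - beta| * (C + 1) < P.[beta] by rewrite -ltr_pdivlMr.
have := normr_ge0 (t - beta).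
have := ler_norm (P.[beta] - P.[t]).
rewrite distrC; set D := `|t - beta|; set E := `|P.[t] - P.[beta]|.
nra.
Qed.

Lemma pos_div (x y : RR) : 0 < x * y -> 0 < x / y.
Proof.
move=> h; have y0 : y != 0 by apply: contraTneq h => ->; rewrite mulr0 ltxx.
have -> : x / y = (x * y) / (y * y) by field.
by rewrite divr_gt0 // lt0r mulf_neq0 //= -expr2 sqr_ge0.
Qed.

Lemma pos_mul (x y : RR) : 0 < x / y -> 0 < x * y.
Proof.
move=> h; have y0 : y != 0 by apply: contraTneq h => ->; rewrite invr0 mulr0 ltxx.
have -> : x * y = (x / y) * (y * y) by field.
by rewrite mulr_gt0 // lt0r mulf_neq0 //= -expr2 sqr_ge0.
Qed.

Lemma near_fin (z : place Ky) beta (bs : seq Ky) :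
  pl z (('X : PR)%:F) = Some beta -> (forall b, b \in bs -> H' b z) ->
  exists d, 0 < d /\ forall t, `|t - beta| < d -> forall b, b \in bs -> H' b (evp t).
Proof.
move=> hX; elim: bs => [|b bs IH] hbs.
  by exists 1; split => // t _ b.
case: IH => [b' hb'|d [d0 hd]]; first by apply: hbs; rewrite inE hb' orbT.
case: (hbs b (mem_head _ _)) => r [hr r0].
case: (classif hX hr (lt0r_neq0 r0)) => p [q [q0 [eb er]]].
have : 0 < (p * q).[beta] by rewrite hornerM pos_mul // -er.
case/poscont => d' [d'0 hd'].
exists (Order.min d d'); split; first by rewrite lt_min d0 d'0.
move=> t; rewrite lt_min => /andP [t1 t2] c; rewrite inE => /orP [/eqP ->|hc].
  have pq := hd' t t2; rewrite hornerM in pq.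
  have qt : q.[t] != 0 by apply: contraTneq pq => ->; rewrite mulr0 ltxx.
  exists (p.[t] / q.[t]); split; last exact: pos_div.
  by apply: evS; exists p, q.
exact: hd.
Qed.
Section GenId.
Variable F : fieldType.
Implicit Types P Q y c : F.
Lemma gid1 P Q y m n : y != 0 -> Q != 0 ->
  P / Q = (P / y ^+ m) / (Q / y ^+ n) * (y ^+ m / y ^+ n).
Proof. by move=> y0 Q0; field; rewrite !expf_neq0 // Q0. Qed.
Lemma gid2 y n k : y != 0 -> y ^+ (n + k) / y ^+ n = y ^+ k.
Proof. by move=> y0; rewrite exprD; field; rewrite expf_neq0. Qed.
Lemma gid3 y n k : y != 0 -> y ^+ n / y ^+ (n + k) = (y^-1) ^+ k.
Proof. by move=> y0; rewrite exprD exprVn; field; rewrite !expf_neq0. Qed.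
Lemma gid4 Q y c n : y != 0 ->
  (Q * y + c) / y ^+ n.+1 = Q / y ^+ n + c * (y^-1) ^+ n.+1.
Proof. by move=> y0; rewrite exprS exprVn exprS; field; rewrite expf_neq0. Qed.
Lemma gid5 y : y != 0 -> y ^+ 0 / y ^+ 0 = 1.
Proof. by move=> y0; rewrite expr0 divr1. Qed.
End GenId.

Lemma zpow_inf (K : fieldType) (z : place K) a k :
  pl z a = None -> pl z (a ^+ k.+1) = None.
Proof.
move=> ha; have Hz := plP z.
have a0 : a != 0 by apply/eqP => e; rewrite e (pz0 Hz) in ha.
have h := pzX Hz (n := k.+1) (pzVN Hz ha); rewrite expr0n /= in h.
have := pzV0 Hz _ h; rewrite -exprVn invrK; apply.
by rewrite expf_neq0 // invr_eq0.
Qed.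

Notation yK := (('X : PR)%:F : Ky).

Lemma yK0 : yK != 0.
Proof. by rewrite tofrac_eq0 polyX_eq0. Qed.

Lemma zinf (z : place Ky) : pl z yK = None ->
  forall P : PR, P != 0 -> pl z (P%:F / yK ^+ (size P).-1) = Some (lead_coef P).
Proof.
move=> hX; have Hz := plP z.
elim/poly_ind => [|Q c IH] P0; first by rewrite eqxx in P0.
have [Q0|Q0] := eqVneq Q 0.
  move: P0; rewrite Q0 mul0r add0r => c0.
  rewrite polyC_eq0 in c0.
  rewrite size_polyC c0 /= expr0 divr1 lead_coefC; exact: zconst.
rewrite size_MXaddC (negbTE Q0) /= lead_coefDl ?lead_coefMX; last first.
  by rewrite size_polyC size_mulX //; case: (c != 0); case: (size Q) (size_poly_gt0 Q) ; rewrite ?Q0.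
rewrite rmorphD rmorphM /=.
have sQ : size Q = (size Q).-1.+1 by rewrite prednK // size_poly_gt0.
rewrite sQ gid4; last exact: yK0.
have h := pzX Hz (n := (size Q).-1.+1) (pzVN Hz hX); rewrite expr0n /= in h.
by have := pzD Hz (IH Q0) (pzM Hz (zconst z c) h); rewrite mulr0 addr0.
Qed.
Lemma classif_inf (z : place Ky) b r : pl z yK = None ->
  pl z b = Some r -> 0 < r ->
  exists p q : PR, b = p%:F / q%:F /\ 0 < lead_coef (p * q).
Proof.
move=> hX hb r0; have Hz := plP z.
case: (fracrep b) => P [Q [Q0 eb]].
have P0 : P != 0.
  apply/negP => /eqP P0; move: hb; rewrite eb P0 rmorph0 mul0r (pz0 Hz).
  by case=> e; rewrite -e ltxx in r0.
exists P, Q; split => //.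
have hA := zinf hX P0; have hB := zinf hX Q0.
have lQ : lead_coef Q != 0 by rewrite lead_coef_eq0.
have hAB := pzM Hz hA (pzV Hz hB lQ).
move: hb; rewrite eb (gid1 _ (size P).-1 (size Q).-1 yK0 (Fq0 Q0)).
set A := (_ / _) in hAB *.
have AB0 : lead_coef P * (lead_coef Q)^-1 != 0.
  by rewrite mulf_neq0 ?invr_eq0 // lead_coef_eq0.
set m := (size P).-1; set n := (size Q).-1.
have [hmn|hmn|hmn] := ltngtP m n.
- have e : n = (m + (n - m))%N by lia.
  rewrite e gid3; last exact: yK0.
  have k1 : (n - m = (n - m).-1.+1)%N by lia.
  rewrite k1.
  have h := pzX Hz (n := (n - m).-1.+1) (pzVN Hz hX); rewrite expr0n /= in h.
  rewrite (pzM Hz hAB h) mulr0 => -[e0]; by rewrite -e0 ltxx in r0.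
- have e : m = (n + (m - n))%N by lia.
  rewrite e gid2; last exact: yK0.
  have k1 : (m - n = (m - n).-1.+1)%N by lia.
  rewrite k1 mulrC (pz_infM Hz (zpow_inf _ hX) hAB AB0) //.
- rewrite hmn divff ?mulr1; last by rewrite expf_neq0 // yK0.
  rewrite hAB => -[e0]; rewrite lead_coefM; apply: pos_mul; by rewrite e0.
Qed.

Lemma near_inf (z : place Ky) (bs : seq Ky) :
  pl z yK = None -> (forall b, b \in bs -> H' b z) ->
  exists N : RR, forall s, N <= s -> forall b, b \in bs -> H' b (evp s).
Proof.
move=> hX; elim: bs => [|b bs IH] hbs.
  by exists 0 => s _ b.
case: IH => [b' hb'|N hN]; first by apply: hbs; rewrite inE hb' orbT.
case: (hbs b (mem_head _ _)) => r [hr r0].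
case: (classif_inf hX hr r0) => p [q [eb lc]].
case: (poly_pinfty_gt_lc lc) => N' hN'.
exists (Num.max N N') => s; rewrite ge_max => /andP [s1 s2] c.
rewrite inE => /orP [/eqP ->|hc]; last exact: hN.
have pq : 0 < (p * q).[s] by apply: lt_le_trans lc (hN' s s2).
rewrite hornerM in pq.
have qt : q.[s] != 0 by apply: contraTneq pq => ->; rewrite mulr0 ltxx.
exists (p.[s] / q.[s]); split; last exact: pos_div.
by apply: evS; exists p, q.
Qed.
Definition gRK : {rmorphism RR -> Ky} := (@FracField.tofrac _) \o polyC.

Lemma polxE p : polx p = (map_poly gRK p)%:F.
Proof. by []. Qed.

Lemma polx1 : polx 1 = 1.
Proof. by rewrite polxE rmorph1 rmorph1. Qed.

Lemma polxXB a : polx ('X - a%:P) = xvar - cst a.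
Proof. by rewrite polxE map_polyXsubC rmorphB. Qed.

Lemma polxX : polx 'X = xvar.
Proof. by rewrite polxE map_polyX. Qed.

Lemma xvarB0 a : xvar - cst a != 0.
Proof.
rewrite /xvar /cst /emb -rmorphB tofrac_eq0.
exact: (negbT (polyXsubC_eq0 _)).
Qed.

Lemma xvar0 : xvar != 0.
Proof. by rewrite /xvar tofrac_eq0 polyX_eq0. Qed.

Lemma yvar0 : yvar != 0.
Proof. by rewrite /yvar /emb tofrac_eq0 polyC_eq0 yK0. Qed.

Lemma yvarB0 b : yvar - cst b != 0.
Proof.
rewrite /yvar /cst /emb -rmorphB -polyCB tofrac_eq0 polyC_eq0 -rmorphB tofrac_eq0.
exact: (negbT (polyXsubC_eq0 _)).
Qed.

Lemma evX t : ev t yK = Some t.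
Proof.
apply: evS; exists 'X, 1; split; first by rewrite hornerC oner_neq0.
by rewrite rmorph1 divr1 hornerX hornerC divr1.
Qed.

Unset Implicit Arguments.

Theorem proposition6p4 (iota : place Ky -> place Kxy) :
  injective iota ->
  (* compatible with restriction: iota(zeta)|_{R(y)} = zeta *)
  (forall zeta : place Ky, restr_y (iota zeta) = pl zeta) ->
  (* all places in the image have the same restriction to R(x) *)
  (forall zeta1 zeta2 : place Ky, forall p q : {poly RR},
      pl (iota zeta1) (polx p / polx q) = pl (iota zeta2) (polx p / polx q)) ->
  (* some xi in the image with 0 < v_xi(X) < n v_xi(Y), where X = x - a if
     xi(x) = a \in R and X = 1/x if xi(x) = oo, likewise Y for y *)
  (exists zeta0 : place Ky, exists n : nat,
      vlt (iota zeta0) 1 (locpar (iota zeta0) xvar) /\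
      vlt (iota zeta0) (locpar (iota zeta0) xvar)
                       (locpar (iota zeta0) yvar ^+ n)) ->
  ~ continuous_map iota.
Proof.
move=> _ hc hr [z0 [n [_ hv]]] hcont.
have comp : forall w f, pl (iota w) (emb f) = pl w f.
  by move=> w f; have := hc w; move/(congr1 (fun g => g f)).
have cstE : forall w c, pl (iota w) (cst c) = Some c.
  by move=> w c; rewrite /cst comp zconst.
have HX : exists p q, locpar (iota z0) xvar = polx p / polx q /\
    locpar (iota z0) xvar != 0 /\ pl (iota z0) (locpar (iota z0) xvar) = Some 0.
  rewrite /locpar; case ex: (pl (iota z0) xvar) => [a|].
    exists ('X - a%:P), 1; rewrite polxXB polx1 divr1; split => //.
    split; first exact: xvarB0.
    by rewrite (pzB (plP _) ex (cstE z0 a)) subrr.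
  exists 1, 'X; rewrite polx1 polxX div1r; split => //.
  split; first by rewrite invr_eq0 xvar0.
  exact: (pzVN (plP _) ex).
have HY : locpar (iota z0) yvar != 0 /\ forall bs : seq Ky, (forall b, b \in bs -> H' b z0) ->
    exists w, (forall b, b \in bs -> H' b w) /\
      exists u, u != 0 /\ pl (iota w) (locpar (iota z0) yvar) = Some u.
  rewrite /locpar /yvar comp; case ey: (pl z0 yK) => [be|].
    split; first exact: yvarB0.
    move=> bs hbs; case: (near_fin ey hbs) => d [d0 hd].
    exists (evp (be + d / 2)); split.
      apply: hd; have -> : be + d / 2 - be = d / 2 by ring.
      rewrite gtr0_norm ?divr_gt0 //; lra.
    exists (d / 2); split; first by rewrite lt0r_neq0 // divr_gt0.
    have hy : pl (iota (evp (be + d / 2))) (emb yK) = Some (be + d / 2).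
      by rewrite comp /= evX.
    have := pzB (plP _) hy (cstE _ be).
    by move=> ->; congr Some; ring.
  split; first by rewrite invr_eq0 yvar0.
  move=> bs hbs; case: (near_inf ey hbs) => N hN.
  exists (evp (Num.max N 1)); split; first by apply: hN; rewrite le_max lexx.
  have s1 : 1 <= Num.max N 1 by rewrite le_max lexx orbT.
  have s0 : Num.max N 1 != 0 by apply: lt0r_neq0; apply: lt_le_trans s1; apply: ltr01.
  exists (Num.max N 1)^-1; split; first by rewrite invr_eq0.
  apply: (pzV (plP _) _ s0).
  by rewrite comp /= evX.
case: HX => p [q [eX [X0 xX]]]; case: HY => Y0 HY.
set X := locpar (iota z0) xvar in eX X0 xX hv.
set Y := locpar (iota z0) yvar in Y0 HY hv.
have Yn0 : Y ^+ n != 0 by rewrite expf_neq0.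
have hg : pl (iota z0) (Y ^+ n / X) = Some 0.
  case h: (pl (iota z0) (X / Y ^+ n)) => [s|].
    exfalso; apply: hv; exists (X / Y ^+ n); split; first by rewrite h.
    by rewrite mulrC (divfK Yn0).
  by have := pzVN (plP _) h; rewrite invf_div.
set g := 1 - Y ^+ n / X.
have xig : pl (iota z0) g = Some 1 by rewrite (pzB (plP _) (pz1 (plP _)) hg) subr0.
have Uopen : is_open (H' g).
  move=> z hz; exists [:: g]; split; first by move=> b; rewrite inE => /eqP ->.
  by move=> w; apply; apply: mem_head.
have [bs [hbs himp]] : exists bs : seq Ky, (forall b, b \in bs -> H' b z0) /\
    (forall w, (forall b, b \in bs -> H' b w) -> H' g (iota w)).
  by apply: (hcont _ Uopen z0); exists 1; rewrite xig ltr01.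
case: (HY bs hbs) => w [hw [u [u0 hu]]].
case: (himp w hw) => r [hgr _].
have wX : pl (iota w) X = Some 0 by rewrite eX (hr w z0) -eX.
have wYn := pzX (plP _) (n := n) hu.
have un0 : u ^+ n != 0 by rewrite expf_neq0.
have wXY := pzM (plP _) wX (pzV (plP _) wYn un0); rewrite mul0r in wXY.
have XY0 : X / Y ^+ n != 0.
  by apply: (mulf_neq0 X0); rewrite invr_eq0; exact: Yn0.
have := pzV0 (plP _) XY0 wXY; rewrite invf_div => hinf.
by rewrite /g (pz_infD (plP _) hinf (pz1 (plP _))) in hgr.
Qed.
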